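(* Let $u_0,\dots,u_4$ be complex numbers with $M_i(U)\neq0$ for all $i$, and let $Y\subset\mathbb{P}^4=\mathrm{Proj}\,\mathbb{C}[v_0,\dots,v_4]$ be the quintic $\sum_{i=0}^4M_i(U)v_i^5=0$ (the image of the Fermat quintic under a diagonal rescaling of coordinates). Let $P=[1:1:1:1:1]$, $Q=[u_0:\dots:u_4]$ (both lying on $Y$), and let $\Lambda$ be the plane $\sum_iM_i(U)v_i=0,\ \sum_iM_i(U)u_i^4v_i=0$. For $b=(b_0,\dots,b_5)\in\mathbb{C}^6$ consider the conic $C_b$, the image of $\gamma_b:\mathbb{P}^1\to\mathbb{P}^4$, $\gamma_b([t:s])=[t^2+b_its+u_ib_5^2s^2]_{i=0,\dots,4}$, which passes through $P=\gamma_b([1:0])$ and $Q=\gamma_b([0:1])$, and let $B=[b_0:\dots:b_4]$. Then the condition $C_b\subset\Lambda$ and $C_b\cdot(Y\cap\Lambda)\ge 3P+3Q$ in $\Lambda$ is equivalent to $B\in\Lambda\cap\Gamma_U\cap\Gamma_{\iota(U)}$, where $\Gamma_U$ and $\Gamma_{\iota(U)}$ are the quadrics in $\mathbb{P}^4$ given by $\sum_{i=0}^4M_i(U)v_i^2=0$ and $\sum_{i=0}^4M_i(U)u_i^3v_i^2=0$ respectively.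
   Context: For $U=(u_0,\dots,u_4)$: for each $i$, $e_1(i),e_2(i),e_3(i)$ denote the elementary symmetric polynomials in the four variables $\{u_j\}_{j\neq i}$; $d_i=\prod_{j,k\neq i,\,j>k}(u_j-u_k)$; $n_i=e_2(i)^2-e_1(i)e_3(i)$; $M_i(U)=(-1)^id_in_i$. These satisfy $\sum_iM_i(U)u_i^k=0$ for $k\in\{0,1,4,5\}$. For a plane curve $Z\subset\Lambda$ and a curve $C\subset\Lambda$, $C\cdot Z\ge 3P+3Q$ means the local intersection multiplicities of $C$ and $Z$ at $P$ and at $Q$ are each at least $3$. *)

(* Defs.v *)
From mathcomp Require Import all_boot all_algebra complex.
From mathcomp Require Import Rstruct.
Set Implicit Arguments. Unset Strict Implicit. Unset Printing Implicit Defensive.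
Import GRing.Theory.
Local Open Scope ring_scope.

Definition C : fieldType := (Rdefinitions.R)[i].

Definition esym_i (u : 'I_5 -> C) (k : nat) (i : 'I_5) : C :=
  \sum_(A : {set 'I_5} | (i \notin A) && (#|A| == k)) \prod_(j in A) u j.

Definition d_i (u : 'I_5 -> C) (i : 'I_5) : C :=
  \prod_(j : 'I_5 | j != i) \prod_(k : 'I_5 | (k != i) && (k < j)%N) (u j - u k).

Definition n_i (u : 'I_5 -> C) (i : 'I_5) : C :=
  esym_i u 2 i ^+ 2 - esym_i u 1 i * esym_i u 3 i.

Definition M (u : 'I_5 -> C) (i : 'I_5) : C :=
  (-1) ^+ i * d_i u i * n_i u i.

Definition quinticY (u : 'I_5 -> C) (v : 'I_5 -> C) : C :=
  \sum_i M u i * v i ^+ 5.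
Definition quinticY_poly (u : 'I_5 -> C) (v : 'I_5 -> {poly C}) : {poly C} :=
  \sum_i M u i *: v i ^+ 5.

Definition lam1 (u : 'I_5 -> C) (v : 'I_5 -> C) : C := \sum_i M u i * v i.
Definition lam2 (u : 'I_5 -> C) (v : 'I_5 -> C) : C :=
  \sum_i M u i * u i ^+ 4 * v i.
Definition in_Lambda (u : 'I_5 -> C) (v : 'I_5 -> C) : Prop :=
  lam1 u v = 0 /\ lam2 u v = 0.

Definition GammaU (u : 'I_5 -> C) (v : 'I_5 -> C) : C :=
  \sum_i M u i * v i ^+ 2.
Definition GammaIotaU (u : 'I_5 -> C) (v : 'I_5 -> C) : C :=
  \sum_i M u i * u i ^+ 3 * v i ^+ 2.

Definition bB (b : 'I_6 -> C) (i : 'I_5) : C := b (widen_ord (leqnSn 5) i).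
Definition b5 (b : 'I_6 -> C) : C := b ord_max.

Definition gamma (u : 'I_5 -> C) (b : 'I_6 -> C) (t s : C) (i : 'I_5) : C :=
  t ^+ 2 + bB b i * t * s + u i * b5 b ^+ 2 * s ^+ 2.

(* gamma_b in the affine chart t = 1 of P^1 around [1:0] (local parameter s,
   written 'X), and in the chart s = 1 around [0:1] (local parameter t). *)
Definition gamma_chartP (u : 'I_5 -> C) (b : 'I_6 -> C) (i : 'I_5) : {poly C} :=
  1 + bB b i *: 'X + (u i * b5 b ^+ 2) *: 'X ^+ 2.
Definition gamma_chartQ (u : 'I_5 -> C) (b : 'I_6 -> C) (i : 'I_5) : {poly C} :=
  'X ^+ 2 + bB b i *: 'X + (u i * b5 b ^+ 2)%:P.

Definition conic_in_Lambda (u : 'I_5 -> C) (b : 'I_6 -> C) : Prop :=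
  forall t s : C, in_Lambda u (gamma u b t s).

Definition vanish_order_ge (k : nat) (p : {poly C}) : bool := 'X ^+ k %| p.

(* Local intersection multiplicity (in Lambda) of C_b with Y cap Lambda at
   P = gamma_b([1:0]) (resp. Q = gamma_b([0:1])) is at least k:
   the pullback of the quintic equation along gamma_b vanishes to order >= k
   at the corresponding parameter. *)
Definition int_mult_P_ge (u : 'I_5 -> C) (b : 'I_6 -> C) (k : nat) : bool :=
  vanish_order_ge k (quinticY_poly u (gamma_chartP u b)).
Definition int_mult_Q_ge (u : 'I_5 -> C) (b : 'I_6 -> C) (k : nat) : bool :=
  vanish_order_ge k (quinticY_poly u (gamma_chartQ u b)).

(* Main.v *)
Require Import Defs.
From mathcomp Require Import all_boot all_algebra complex.
From mathcomp Require Import ring Rstruct.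
Import GRing.Theory.
Local Open Scope ring_scope.

Notation o0 := (@Ordinal 5 0 isT).
Notation o1 := (@Ordinal 5 1 isT).
Notation o2 := (@Ordinal 5 2 isT).
Notation o3 := (@Ordinal 5 3 isT).
Notation o4 := (@Ordinal 5 4 isT).
Arguments C : simpl never.
Ltac evb := cbv beta; repeat match goal with |- context [if ?b then _ else _] => lazymatch b with true => fail | false => fail | _ => let v := eval vm_compute in b in change b with v end end; cbv beta iota.
Lemma big5 (R : Type) (idx : R) (op : Monoid.law idx) (F : 'I_5 -> R) :
  \big[op/idx]_(j < 5) F j = op (F o0) (op (F o1) (op (F o2) (op (F o3) (op (F o4) idx)))).
Proof.
rewrite !big_ord_recl big_ord0.
by do 5 (congr (op (F _) _); first by apply/val_inj).
Qed.
Lemma prod5 (R : nzRingType) (F : 'I_5 -> R) :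
  \prod_(j < 5) F j = F o0 * (F o1 * (F o2 * (F o3 * (F o4 * 1)))).
Proof. by rewrite big5. Qed.
Lemma sum5 (R : nzRingType) (F : 'I_5 -> R) :
  \sum_(j < 5) F j = F o0 + (F o1 + (F o2 + (F o3 + (F o4 + 0)))).
Proof. by rewrite big5. Qed.

Lemma esym_coef (v : 'I_5 -> C) k :
  \sum_(A : {set 'I_5} | #|A| == k) \prod_(j in A) v j = (\prod_(j < 5) (v j *: 'X + 1))`_k.
Proof.
rewrite bigA_distr coef_sum big_mkcond.
apply: eq_big => // J _.
rewrite -big_mkcond scaler_prod prodr_const coefZ coefXn eq_sym.
by case: (k == #|J|)%N; rewrite ?mulr1 ?mulr0.
Qed.

Lemma esymE (u : 'I_5 -> C) k i :
  esym_i u k i = (\prod_(j < 5) ((if j == i then 0 else u j) *: 'X + 1))`_k.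
Proof.
rewrite -esym_coef /esym_i [LHS]big_mkcond [RHS]big_mkcond.
apply: eq_bigr => A _.
case: (boolP (i \in A)) => iA.
  change (~~ true) with false.
  rewrite andFb; case: (#|A| == k) => //.
  by rewrite (bigD1 i) // eqxx; symmetry; exact: mul0r.
change (~~ false) with true.
rewrite andTb; case: (#|A| == k) => //.
apply: eq_bigr => j jA.
case: eqP => // eji; by rewrite -eji jA in iA.
Qed.

Lemma coefL0 (a : C) (p : {poly C}) : ((a *: 'X + 1) * p)`_0 = p`_0.
Proof. by rewrite mulrDl mul1r coefD -scalerAl coefZ coefXM /= mulr0 add0r. Qed.
Lemma coefLS (a : C) (p : {poly C}) k : ((a *: 'X + 1) * p)`_k.+1 = p`_k.+1 + a * p`_k.
Proof. by rewrite mulrDl mul1r coefD -scalerAl coefZ coefXM /= addrC. Qed.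
Lemma coef1_0 : (1 : {poly C})`_0 = 1. Proof. by rewrite coef1. Qed.
Lemma coef1_S k : (1 : {poly C})`_k.+1 = 0. Proof. by rewrite coef1. Qed.

Ltac expandM := rewrite /M /d_i /n_i !esymE; rewrite !(big_mkcond (fun j => j != _)) !prod5; cbv beta; rewrite !(big_mkcond (fun k => _ && _)) !prod5; evb;
  rewrite !coefLS !coefL0 ?coef1_0 ?coef1_S.


Definition Mx (a b c d : C) : C :=
  (b - a) * (c - a) * (d - a) * (c - b) * (d - b) * (d - c) *
  ((a*b + a*c + a*d + b*c + b*d + c*d) ^+ 2 - (a + b + c + d) * (a*b*c + a*b*d + a*c*d + b*c*d)).

Lemma M0 (u : 'I_5 -> C) : M u o0 = Mx (u o1) (u o2) (u o3) (u o4).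
Proof. expandM; rewrite /Mx; ring. Qed.
Lemma M1 (u : 'I_5 -> C) : M u o1 = - Mx (u o0) (u o2) (u o3) (u o4).
Proof. expandM; rewrite /Mx; ring. Qed.
Lemma M2 (u : 'I_5 -> C) : M u o2 = Mx (u o0) (u o1) (u o3) (u o4).
Proof. expandM; rewrite /Mx; ring. Qed.
Lemma M3 (u : 'I_5 -> C) : M u o3 = - Mx (u o0) (u o1) (u o2) (u o4).
Proof. expandM; rewrite /Mx; ring. Qed.
Lemma M4 (u : 'I_5 -> C) : M u o4 = Mx (u o0) (u o1) (u o2) (u o3).
Proof. expandM; rewrite /Mx; ring. Qed.

Lemma I0 (u : 'I_5 -> C) : \sum_i M u i = 0.
Proof. rewrite sum5 M0 M1 M2 M3 M4 /Mx; ring. Qed.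
Lemma I1 (u : 'I_5 -> C) : \sum_i M u i * u i = 0.
Proof. rewrite sum5 M0 M1 M2 M3 M4 /Mx; ring. Qed.
Lemma I4 (u : 'I_5 -> C) : \sum_i M u i * u i ^+ 4 = 0.
Proof. rewrite sum5 M0 M1 M2 M3 M4 /Mx; ring. Qed.
Lemma I5 (u : 'I_5 -> C) : \sum_i M u i * u i ^+ 5 = 0.
Proof. rewrite sum5 M0 M1 M2 M3 M4 /Mx; ring. Qed.

Lemma vo3 (R : fieldType) (p : {poly R}) : ('X^3 %| p) = [&& p`_0 == 0, p`_1 == 0 & p`_2 == 0].
Proof.
rewrite /dvdp -Pdiv.IdomainMonic.take_poly_modp.
apply/eqP/and3P => [h | [/eqP h0 /eqP h1 /eqP h2]].
  split; apply/eqP.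
  - by have := congr1 (fun q : {poly R} => q`_0) h; rewrite coef_take_poly coef0.
  - by have := congr1 (fun q : {poly R} => q`_1) h; rewrite coef_take_poly coef0.
  - by have := congr1 (fun q : {poly R} => q`_2) h; rewrite coef_take_poly coef0.
apply/polyP => i; rewrite coef_take_poly coef0.
by case: i => [|[|[|i]]].
Qed.
Lemma gP (R : comNzRingType) (a0 a1 a2 : R) (p : {poly R}) k :
  ((a0%:P + a1 *: 'X + a2 *: 'X^2) * p)`_k =
  a0 * p`_k + (if k is k'.+1 then a1 * p`_k' else 0) + (if k is k'.+2 then a2 * p`_k' else 0).
Proof.
rewrite !mulrDl -!scalerAl !coefD coefCM !coefZ coefXM coefXnM.
by case: k => [|[|k]] /=; rewrite ?mulr0 ?subn2.
Qed.
Lemma e5 (R : nzRingType) (q : {poly R}) : q ^+ 5 = q * (q * (q * (q * (q * 1)))).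
Proof. by rewrite !exprS expr0. Qed.
Lemma g5_0 (R : comNzRingType) (a0 a1 a2 : R) : ((a0%:P + a1 *: 'X + a2 *: 'X^2) ^+ 5)`_0 = a0 ^+ 5.
Proof. rewrite e5 !gP /= coef1 /=; ring. Qed.
 
Lemma g5_1 (R : comNzRingType) (a0 a1 a2 : R) : ((a0%:P + a1 *: 'X + a2 *: 'X^2) ^+ 5)`_1 = 5%:R * a0 ^+ 4 * a1.
Proof. by rewrite e5 !gP /= !coef1 /=; ring. Qed.
Lemma g5_2 (R : comNzRingType) (a0 a1 a2 : R) : ((a0%:P + a1 *: 'X + a2 *: 'X^2) ^+ 5)`_2 = 10%:R * a0 ^+ 3 * a1 ^+ 2 + 5%:R * a0 ^+ 4 * a2.
Proof. by rewrite e5 !gP /= !coef1 /=; ring. Qed.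
Lemma natC_neq0 n : (n.+1%:R : C) != 0.
Proof. have h : (n.+1%:R == 0 :> (Rdefinitions.R)[i]) = false by rewrite Num.Theory.pnatr_eq0. exact: (negbT h). Qed.

Lemma lam1_gamma (u : 'I_5 -> C) (b : 'I_6 -> C) t s :
  lam1 u (gamma u b t s) = t ^+ 2 * \sum_i M u i + t * s * lam1 u (bB b)
    + b5 b ^+ 2 * s ^+ 2 * \sum_i M u i * u i.
Proof. rewrite /lam1 /gamma !sum5; ring. Qed.

Lemma lam2_gamma (u : 'I_5 -> C) (b : 'I_6 -> C) t s :
  lam2 u (gamma u b t s) = t ^+ 2 * \sum_i M u i * u i ^+ 4 + t * s * lam2 u (bB b)
    + b5 b ^+ 2 * s ^+ 2 * \sum_i M u i * u i ^+ 5.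
Proof. rewrite /lam2 /gamma !sum5; ring. Qed.

Lemma qP (u : 'I_5 -> C) (b : 'I_6 -> C) k :
  (quinticY_poly u (gamma_chartP u b))`_k =
  \sum_i M u i * (((1 : C)%:P + bB b i *: 'X + (u i * b5 b ^+ 2) *: 'X ^+ 2) ^+ 5)`_k.
Proof.
rewrite /quinticY_poly coef_sum; apply: eq_bigr => i _.
by rewrite coefZ /gamma_chartP polyC1.
Qed.

Lemma qQ (u : 'I_5 -> C) (b : 'I_6 -> C) k :
  (quinticY_poly u (gamma_chartQ u b))`_k =
  \sum_i M u i * (((u i * b5 b ^+ 2)%:P + bB b i *: 'X + (1 : C) *: 'X ^+ 2) ^+ 5)`_k.
Proof.
rewrite /quinticY_poly coef_sum; apply: eq_bigr => i _.
rewrite coefZ /gamma_chartQ scale1r.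
have -> : 'X ^+ 2 + bB b i *: 'X + (u i * b5 b ^+ 2)%:P =
  (u i * b5 b ^+ 2)%:P + bB b i *: 'X + 'X ^+ 2 :> {poly C}.
  by rewrite addrC (addrC ('X ^+ 2)) addrA.
by [].
Qed.

Lemma cP0 u b : (quinticY_poly u (gamma_chartP u b))`_0 = \sum_i M u i.
Proof. rewrite qP; under eq_bigr => i _ do rewrite g5_0. rewrite !sum5; ring. Qed.
Lemma cP1 u b : (quinticY_poly u (gamma_chartP u b))`_1 = 5%:R * lam1 u (bB b).
Proof. rewrite qP; under eq_bigr => i _ do rewrite g5_1. rewrite /lam1 !sum5; ring. Qed.
Lemma cP2 u b : (quinticY_poly u (gamma_chartP u b))`_2 =
  10%:R * GammaU u (bB b) + 5%:R * b5 b ^+ 2 * \sum_i M u i * u i.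
Proof. rewrite qP; under eq_bigr => i _ do rewrite g5_2. rewrite /GammaU !sum5; ring. Qed.
Lemma cQ0 u b : (quinticY_poly u (gamma_chartQ u b))`_0 = b5 b ^+ 10 * \sum_i M u i * u i ^+ 5.
Proof. rewrite qQ; under eq_bigr => i _ do rewrite g5_0. rewrite !sum5; ring. Qed.
Lemma cQ1 u b : (quinticY_poly u (gamma_chartQ u b))`_1 = 5%:R * b5 b ^+ 8 * lam2 u (bB b).
Proof. rewrite qQ; under eq_bigr => i _ do rewrite g5_1. rewrite /lam2 !sum5; ring. Qed.
Lemma cQ2 u b : (quinticY_poly u (gamma_chartQ u b))`_2 =
  10%:R * b5 b ^+ 6 * GammaIotaU u (bB b) + 5%:R * b5 b ^+ 8 * \sum_i M u i * u i ^+ 4.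
Proof. rewrite qQ; under eq_bigr => i _ do rewrite g5_2. rewrite /GammaIotaU !sum5; ring. Qed.

Theorem mainTheorem4 (u : 'I_5 -> C) (b : 'I_6 -> C)
  (hM : forall i : 'I_5, M u i != 0)
  (hb5 : b5 b != 0)              (* gamma_b is defined at [0:1], Q = gamma_b([0:1]) *)
  (hB : exists i : 'I_5, bB b i != 0)     (* B = [b_0 : ... : b_4] is a point of P^4 *) :
  (conic_in_Lambda u b /\ int_mult_P_ge u b 3 /\ int_mult_Q_ge u b 3)
  <->
  (in_Lambda u (bB b) /\ GammaU u (bB b) = 0 /\ GammaIotaU u (bB b) = 0).
Proof.
have n5 : (5%:R : C) != 0 := natC_neq0 4.
have n10 : (10%:R : C) != 0 := natC_neq0 9.
have hc6 : b5 b ^+ 6 != 0 by rewrite expf_neq0.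
rewrite /int_mult_P_ge /int_mult_Q_ge /vanish_order_ge !vo3.
split.
- move=> [hC [/and3P [_ _ /eqP hP2] /and3P [_ _ /eqP hQ2]]].
  have [h1 h2] := hC 1 1.
  rewrite lam1_gamma I0 I1 !mulr0 add0r addr0 !mul1r in h1.
  rewrite lam2_gamma I4 I5 !mulr0 add0r addr0 !mul1r in h2.
  rewrite cP2 I1 mulr0 addr0 in hP2.
  rewrite cQ2 I4 mulr0 addr0 in hQ2.
  split; first by split.
  split.
    by move/eqP: hP2; rewrite mulf_eq0 (negbTE n10) /= => /eqP.
  by move/eqP: hQ2; rewrite 2!mulf_eq0 (negbTE n10) (negbTE hc6) /= => /eqP.
- move=> [[h1 h2] [hG hI]].
  split.
    move=> t s; split.
      by rewrite lam1_gamma I0 I1 h1 !mulr0 !addr0.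
    by rewrite lam2_gamma I4 I5 h2 !mulr0 !addr0.
  rewrite cP0 cP1 cP2 cQ0 cQ1 cQ2 I0 I1 I4 I5 h1 h2 hG hI !mulr0 !addr0.
  by rewrite !eqxx.
Qed.
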